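(* Let $n\geq1$, $p$ a prime and $R\subsetneq E_n$. Then every $x\in\mathbb{Z}^n$ satisfying $F^{(i)}_R(x)\le0$ for all $i\in E_n$ and $x_i\geq0$ for all $i\in R$ is a linear combination with non-negative rational coefficients of the vectors $\lambda^{(i)}_k$, $1\le i\le h$, $1\le k\le g_i$.
   Context: $E_n=\{1,\dots,n\}$, indices taken modulo $n$; $e_1,\dots,e_n$ standard basis of $\mathbb{Z}^n$, extended $n$-periodically to $e_m$, $m\in\mathbb{Z}$. $\delta_R^{(i)}=-1$ if $i\in R$, $1$ otherwise; $F^{(d)}_R(x)=\sum_{i=0}^{n-1}p^i\delta_R^{(d+i)}x_{d+i}$. Write $E_n\setminus R=\{r_1,\dots,r_h\}$ ($h=n-|R|\ge1$) so that $r_{i+1}$ is the first element of $E_n\setminus R$ in the cyclic sequence $r_i+1,r_i+2,\dots$ (with $r_{h+1}=r_1$, $r_0=r_h$). Let $g_i$ be the smallest positive integer with $r_{i-1}+g_i\equiv r_i \pmod n$ (so $\sum_i g_i=n$). Define $\lambda^{(i)}_k=e_{r_i}+p^ke_{r_i-k}$ for $1\le k\le g_i-1$ and $\lambda^{(i)}_{g_i}=e_{r_i}-p^{g_i}e_{r_{i-1}}$. *)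

(* Defs.v *)
From HB Require Import structures.
From mathcomp Require Import all_boot all_order all_algebra.
Set Implicit Arguments. Unset Strict Implicit. Unset Printing Implicit Defensive.
Import Order.TTheory GRing.Theory Num.Theory.
Local Open Scope ring_scope.

(* Conventions: E_n = {1,...,n} with n >= 1 is represented by 'I_n.+1
   = {0,...,n}, i.e. index j of the paper is (j-1) here; all indices are
   taken modulo N := n.+1 via inZp. *)

Definition cidx (n m : nat) : 'I_n.+1 := inZp m.

(* cyclic index r - k (mod N), for k <= N *)
Definition cminus (n : nat) (r : 'I_n.+1) (k : nat) : 'I_n.+1 :=
  cidx n (r + n.+1 - k)%N.

Definition deltaR (n : nat) (R : {set 'I_n.+1}) (i : 'I_n.+1) : int :=
  if i \in R then -1 else 1.

Definition FR (n p : nat) (R : {set 'I_n.+1}) (d : 'I_n.+1)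
    (x : 'I_n.+1 -> int) : int :=
  \sum_(i < n.+1) (p%:Z) ^+ i * deltaR R (cidx n (d + i)) * x (cidx n (d + i)).

(* For r not in R: gap R r = smallest positive g with r - g (mod N) not in R,
   i.e. the g_i with r = r_i and r_{i-1} = r - g_i. *)
Definition gap (n : nat) (R : {set 'I_n.+1}) (r : 'I_n.+1) : nat :=
  (find (fun j : nat => cminus r j.+1 \notin R) (iota 0 n.+1)).+1.

Definition evec (n : nat) (j : 'I_n.+1) : 'I_n.+1 -> rat :=
  fun i => (i == j)%:R.

Definition lambdaR (n p : nat) (R : {set 'I_n.+1}) (r : 'I_n.+1) (k : nat)
    : 'I_n.+1 -> rat :=
  fun i =>
    if (k < gap R r)%N then evec r i + (p%:R) ^+ k * evec (cminus r k) i
    else evec r i - (p%:R) ^+ (gap R r) * evec (cminus r (gap R r)) i.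

(* Main.v *)
Require Import Defs.
From HB Require Import structures.
From mathcomp Require Import all_boot all_order all_algebra.
From mathcomp Require Import zify ring lra.
Import Order.TTheory GRing.Theory Num.Theory.
Local Open Scope ring_scope.

Lemma find_le (P : pred nat) N j : (j < N)%N -> P j -> (find P (iota 0 N) <= j)%N.
Proof.
move=> jN Pj; rewrite leqNgt; apply/negP => /(before_find 0).
by rewrite nth_iota // add0n Pj.
Qed.

Lemma find_lt_P (P : pred nat) N : (find P (iota 0 N) < N)%N -> P (find P (iota 0 N)).
Proof.
move=> h.
have Hh : has P (iota 0 N) by rewrite has_find size_iota.
by have := nth_find 0 Hh; rewrite nth_iota // add0n.
Qed.

Lemma before_P (P : pred nat) N j : (j < find P (iota 0 N))%N -> ~~ P j.
Proof.
move=> h; have := before_find 0 h.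
have jN : (j < N)%N.
  apply: leq_trans h _; rewrite -{2}(size_iota 0 N); exact: find_size.
by rewrite nth_iota // add0n => ->.
Qed.

Lemma find_ge (P : pred nat) N a : (a <= N)%N -> (forall j, (j < a)%N -> ~~ P j) ->
  (a <= find P (iota 0 N))%N.
Proof.
move=> aN H; rewrite leqNgt; apply/negP => h.
by have := @find_lt_P P N (leq_trans h aN); rewrite (negbTE (H _ h)).
Qed.

Lemma shift_id (P : rat) (z : nat -> rat) N g : (forall t, z (t + N)%N = z t) -> (g <= N)%N ->
 \sum_(s < N) P^+s * z s - P^+g * \sum_(s<N) P^+s * z (s+g)%N
   = (1 - P^+N) * \sum_(j<g) P^+j * z j.
Proof.
move=> zN gN.
rewrite mulr_sumr.
have -> : \sum_(i < N) P ^+ g * (P ^+ i * z (i + g)%N) = \sum_(g <= s < N + g) P^+s * z s.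
  symmetry; rewrite (big_addn 0 (N+g) g) addnK big_mkord; apply: eq_bigr => i _.
  by rewrite mulrA -exprD addnC.
rewrite -!(big_mkord xpredT (fun s => P^+s * z s)).
rewrite (big_cat_nat _ (n:=g)) //= (big_cat_nat _ (m:=g) (n:=N) (p:=N+g)) //=; last by rewrite leq_addr.
rewrite (big_addn 0 (N+g) N).
have -> : \sum_(0 <= i < N + g - N) P ^+ (i + N) * z (i + N)%N = P^+N * \sum_(0 <= i < g) P^+ i * z i.
  rewrite mulr_sumr addKn; apply: eq_bigr => i _; rewrite zN exprD; ring.
rewrite big_mkord; ring.
Qed.

Set Implicit Arguments. Unset Strict Implicit.

Definition nxt n (R : {set 'I_n.+1}) (i : 'I_n.+1) : nat :=
  (find (fun j => cidx n (i + j.+1) \notin R) (iota 0 n.+1)).+1.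

Lemma cidx_ord n (i : 'I_n.+1) : cidx n i = i.
Proof. by apply: val_inj; rewrite /= modn_small. Qed.

Lemma cidx_mod n a b : a = b %[mod n.+1] -> cidx n a = cidx n b.
Proof. by move=> h; apply: val_inj. Qed.

Lemma cminus_N n (r : 'I_n.+1) : cminus r n.+1 = r.
Proof. by rewrite /cminus addnK cidx_ord. Qed.

Lemma cminus_0 n (r : 'I_n.+1) : cminus r 0 = r.
Proof. by rewrite /cminus subn0; apply: val_inj; rewrite /= modnDr modn_small. Qed.

Section G.
Variables (n : nat) (R : {set 'I_n.+1}).

Lemma gap_le r : r \notin R -> (gap R r <= n.+1)%N.
Proof. by move=> rR; rewrite /gap ltnS; apply: find_le => //; rewrite cminus_N. Qed.

Lemma gap_notin r : r \notin R -> cminus r (gap R r) \notin R.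
Proof.
move=> rR; rewrite /gap.
exact: (@find_lt_P (fun j : nat => cminus r j.+1 \notin R) n.+1 (gap_le rR)).
Qed.

Lemma gap_in r k : (0 < k)%N -> (k < gap R r)%N -> cminus r k \in R.
Proof.
move=> k0 kg.
have H := (@before_P (fun j : nat => cminus r j.+1 \notin R) n.+1 k.-1).
have : (k.-1 < find (fun j : nat => cminus r j.+1 \notin R) (iota 0 n.+1))%N.
  by rewrite -ltnS prednK.
by move/H; rewrite prednK // negbK.
Qed.

Lemma cminus_shift (r i : 'I_n.+1) k j : cminus r k = i -> (j <= k)%N -> (k <= n.+1)%N ->
  cminus r (k - j) = cidx n (i + j).
Proof.
move=> h jk kN; apply: val_inj => /=.
have -> : (r + n.+1 - (k - j) = (r + n.+1 - k) + j)%N by lia.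
by rewrite -modnDml -h.
Qed.

Lemma cminus_back (i : 'I_n.+1) m : (m <= n.+1)%N -> cminus (cidx n (i + m)) m = i.
Proof.
move=> mN; apply: val_inj => /=.
apply/eqP; rewrite -{2}(modn_small (ltn_ord i)) -(eqn_modDr m).
have -> : (((i + m) %% n.+1) + n.+1 - m + m = (i + m) %% n.+1 + n.+1)%N by lia.
by rewrite modnDr modn_mod.
Qed.

Variable j0 : 'I_n.+1.
Hypothesis j0R : j0 \notin R.

Lemma nxt_le (i : 'I_n.+1) : (nxt R i <= n.+1)%N.
Proof.
rewrite /nxt ltnS; apply: (@leq_trans ((j0 + n - i) %% n.+1)); last first.
  by rewrite -ltnS ltn_pmod.
apply: find_le; first by rewrite ltn_pmod.
suff -> : cidx n (i + ((j0 + n - i) %% n.+1).+1) = j0 by [].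
apply: (@etrans _ _ (cidx n j0)); last exact: cidx_ord.
apply: cidx_mod.
have -> : (i + ((j0 + n - i) %% n.+1).+1 = (i+1) + (j0 + n - i) %% n.+1)%N by lia.
rewrite modnDmr.
have -> : (i + 1 + (j0 + n - i) = j0 + n.+1)%N by have := ltn_ord i; lia.
by rewrite modnDr.
Qed.

Lemma nxt_notin (i : 'I_n.+1) : cidx n (i + nxt R i) \notin R.
Proof.
rewrite /nxt.
exact: (@find_lt_P (fun j : nat => cidx n (i + j.+1) \notin R) n.+1 (nxt_le i)).
Qed.

Lemma nxt_in (i : 'I_n.+1) j : (0 < j)%N -> (j < nxt R i)%N -> cidx n (i + j) \in R.
Proof.
move=> j0' jm.
have H := (@before_P (fun j : nat => cidx n (i + j.+1) \notin R) n.+1 j.-1).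
have : (j.-1 < find (fun j : nat => cidx n (i + j.+1) \notin R) (iota 0 n.+1))%N.
  by rewrite -ltnS prednK.
by move/H; rewrite prednK // negbK.
Qed.

Lemma key_fwd (r i : 'I_n.+1) k : r \notin R -> (0 < k)%N -> (k <= gap R r)%N ->
  cminus r k = i -> k = nxt R i /\ r = cidx n (i + k).
Proof.
move=> rR k0 kg h.
have kN : (k <= n.+1)%N by exact: (leq_trans kg (gap_le rR)).
have er : r = cidx n (i + k) by rewrite -(cminus_shift h (leqnn k) kN) subnn cminus_0.
split => //.
rewrite /nxt -(prednK k0); congr S; apply/eqP; rewrite eqn_leq; apply/andP; split; last first.
  apply: find_le; first by lia.
  by rewrite prednK // -er.
apply: find_ge; first by lia.
move=> j jk; rewrite negbK -(cminus_shift h (_ : (j.+1 <= k)%N) kN); last by lia.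
apply: gap_in; lia.
Qed.

Lemma r0_notin (i : 'I_n.+1) : cidx n (i + nxt R i) \notin R.
Proof. exact: nxt_notin. Qed.

Lemma r0_back (i : 'I_n.+1) : cminus (cidx n (i + nxt R i)) (nxt R i) = i.
Proof. exact: cminus_back (nxt_le i). Qed.

Lemma r0_aux (i : 'I_n.+1) j : (j < nxt R i)%N -> (i \in R) || (j < (nxt R i).-1)%N ->
  cminus (cidx n (i + nxt R i)) j.+1 \in R.
Proof.
move=> jm H.
have mN := nxt_le i.
rewrite -(_ : nxt R i - (nxt R i - j.+1) = j.+1)%N; last by lia.
rewrite (cminus_shift (r0_back i)) //; last by lia.
case: (posnP (nxt R i - j.+1)) => [e|hp].
  rewrite e addn0 cidx_ord; case/orP: H => // H; lia.
apply: nxt_in => //; lia.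
Qed.

Lemma r0_gap_ge (i : 'I_n.+1) : (nxt R i <= gap R (cidx n (i + nxt R i)))%N.
Proof.
have mN := nxt_le i.
have m0 : (0 < nxt R i)%N by rewrite /nxt.
rewrite /gap; apply: (@leq_trans (nxt R i).-1.+1); first by lia.
rewrite ltnS; apply: find_ge; first by lia.
move=> j jm; rewrite negbK; apply: r0_aux; last by rewrite jm orbT.
lia.
Qed.

Lemma r0_gap_in (i : 'I_n.+1) : i \in R -> (nxt R i < gap R (cidx n (i + nxt R i)))%N.
Proof.
move=> iR; rewrite /gap ltnS.
apply: find_ge; first by have := nxt_le i.
by move=> j jm; rewrite negbK; apply: r0_aux => //; rewrite iR.
Qed.

Lemma r0_gap_notin (i : 'I_n.+1) : i \notin R -> gap R (cidx n (i + nxt R i)) = nxt R i.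
Proof.
move=> iR; apply/eqP; rewrite eqn_leq r0_gap_ge andbT.
rewrite /gap /nxt ltnS; apply: find_le; first by have := nxt_le i; rewrite /nxt.
by have := r0_back i; rewrite /nxt => ->.
Qed.

End G.

Lemma alg_core (P : rat) (z : nat -> rat) N G M : (forall t, z (t + N)%N = z t) -> (G < N)%N ->
  1 < P ->
  z G = (\sum_(1 <= k < G.+1) (- z (G - k)%N) / P^+k
         + (- \sum_(s < N) P^+s * z s) / (P^+G * (P^+N - 1)))
        + (- \sum_(s < N) P^+s * z (s + G.+1)%N) / (P^+M * (P^+N - 1)) * - P^+M.+1.
Proof.
move=> zN GN P1.
have P0 : P != 0 by apply/eqP => e; rewrite e in P1; lra.
have Q0 : P^+N - 1 != 0.
  rewrite subr_eq0; apply/eqP => e.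
  have : 1 < P^+N by rewrite exprn_egt1 //; lia.
  by rewrite e ltxx.
have PG0 : P^+G != 0 by rewrite expf_neq0.
have PM0 : P^+M != 0 by rewrite expf_neq0.
have H := shift_id P z N G.+1 zN GN.
set A := \sum_(s < N) P^+s * z s in H *.
set B := \sum_(s < N) P^+s * z (s + G.+1)%N in H *.
have Hrev : \sum_(j < G.+1) P^+j * z j = P^+G * \sum_(0 <= k < G.+1) z (G - k)%N / P^+k.
  rewrite -(big_mkord xpredT (fun j => P^+j * z j)) big_nat_rev mulr_sumr.
  apply: eq_big_nat => k /andP [_ kG].
  rewrite add0n subSS exprB ?unitfE //.
  by rewrite mulrA mulrAC.
rewrite Hrev big_ltn // subn0 expr0 divr1 in H.
set S := \sum_(1 <= k < G.+1) z (G - k)%N / P^+k in H.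
have -> : \sum_(1 <= k < G.+1) (- z (G - k)%N) / P^+k = - S.
  by rewrite -sumrN; apply: eq_bigr => k _; rewrite mulNr.
have eA : A = P^+G.+1 * B + (1 - P ^+ N) * (P ^+ G * (z G + S)) by rewrite -H; ring.
rewrite eA !exprS.
field.
by rewrite PG0 PM0 Q0.
Qed.

Definition Yv n (R : {set 'I_n.+1}) (x : 'I_n.+1 -> int) (m : nat) : rat :=
  (deltaR R (cidx n m) * x (cidx n m))%:~R.
Definition uu n p (R : {set 'I_n.+1}) x (r : 'I_n.+1) : rat :=
  - (FR p R (cminus r (gap R r).-1) x)%:~R / ((p%:R)^+(gap R r).-1 * ((p%:R)^+ n.+1 - 1)).
Definition cc n p (R : {set 'I_n.+1}) x (r : 'I_n.+1) (k : nat) : rat :=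
  if r \in R then 0 else if (0 < k < gap R r)%N then (x (cminus r k))%:~R / (p%:R)^+k
  else uu p R x r.

Lemma Yv_mod n R x a b : a = b %[mod n.+1] -> @Yv n R x a = Yv R x b.
Proof. by move=> h; rewrite /Yv (cidx_mod h). Qed.

Lemma FR_Y n p R (d : 'I_n.+1) x :
  (FR p R d x)%:~R = \sum_(s < n.+1) (p%:R : rat)^+s * Yv R x (d + s).
Proof.
rewrite /FR rmorph_sum; apply: eq_bigr => s _.
by rewrite /Yv -mulrA rmorphM /= rmorphXn /= pmulrn.
Qed.

Lemma uu_ge0 n p R x (r : 'I_n.+1) : (1 < p)%N -> (forall d, FR p R d x <= 0) ->
  0 <= uu p R x r.
Proof.
move=> p1 Fle; rewrite /uu; apply: divr_ge0.
  by rewrite oppr_ge0 lerz0.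
apply: mulr_ge0; first by rewrite exprn_ge0 // ler0n.
rewrite subr_ge0 exprn_ege1 // ler1n; lia.
Qed.

Lemma lambda_split n p R (r i : 'I_n.+1) k : (k <= gap R r)%N ->
  lambdaR p R r k i = (i == r)%:R +
    (if (k < gap R r)%N then (p%:R:rat)^+k else - (p%:R)^+(gap R r)) * (i == cminus r k)%:R.
Proof.
move=> kg; rewrite /lambdaR /evec; case: ifP => // h.
have e : k = gap R r by apply/eqP; rewrite eqn_leq kg leqNgt h.
by rewrite e mulNr.
Qed.

Lemma sum_pick (V : rat) a b m : (a <= m < b)%N ->
  \sum_(a <= k < b) (if k == m then V else 0) = V.
Proof.
move=> h; rewrite (bigD1_seq m) ?mem_index_iota ?iota_uniq //= eqxx big1 ?addr0 //.
by move=> k /negbTE ->.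
Qed.

Lemma final_eq n p (R : {set 'I_n.+1}) (x : 'I_n.+1 -> int) (i : 'I_n.+1) m : (1 < p)%N -> i \notin R -> (0 < m)%N ->
  (m <= n.+1)%N -> gap R (cidx n (i+m)) = m -> (gap R i <= n.+1)%N ->
  (forall k, (0 < k)%N -> (k < gap R i)%N -> cminus i k \in R) ->
  (x i)%:~R = (\sum_(1 <= k < gap R i) (x (cminus i k))%:~R / (p%:R)^+k + uu p R x i)
              + uu p R x (cidx n (i + m)) * - (p%:R)^+m.
Proof.
move=> p1 iR m0 mN gm gN ginR.
have P1 : 1 < (p%:R : rat) by rewrite ltr1n.
rewrite /uu gm !FR_Y.
set g := gap R i in gN ginR *.
have g0 : (0 < g)%N by [].
set G := g.-1.
have eg : g = G.+1 by rewrite /G prednK.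
set M := m.-1.
have em : m = M.+1 by rewrite /M prednK.
pose z t := Yv R x (i + n.+1 - G + t).
have zN : forall t, z (t + n.+1)%N = z t.
  by move=> t; rewrite /z; apply: Yv_mod; rewrite addnA modnDr.
have e1 : \sum_(s < n.+1) (p%:R : rat)^+s * Yv R x (cminus i G + s)
          = \sum_(s < n.+1) (p%:R : rat)^+s * z s.
  apply: eq_bigr => s _; congr (_ * _); apply: Yv_mod => /=.
  by rewrite modnDml.
have e2 : \sum_(s < n.+1) (p%:R : rat)^+s * Yv R x (cminus (cidx n (i + m)) M + s)
          = \sum_(s < n.+1) (p%:R : rat)^+s * z (s + G.+1)%N.
  apply: eq_bigr => s _; congr (_ * _); apply: Yv_mod => /=.
  rewrite modnDml.
  have -> : ((i + m) %% n.+1 + n.+1 - M + s = (i + m) %% n.+1 + (n.+1 - M + s))%N by lia.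
  rewrite modnDml.
  have -> : (i + m + (n.+1 - M + s) = i + n.+1 - G + (s + G.+1))%N by lia.
  by [].
have e3 : \sum_(1 <= k < g) (x (cminus i k))%:~R / (p%:R : rat)^+k
          = \sum_(1 <= k < G.+1) (- z (G - k)%N) / (p%:R : rat)^+k.
  rewrite eg; apply: eq_big_nat => k /andP[k1 kG].
  congr (_ / _).
  have -> : z (G - k)%N = Yv R x (i + n.+1 - k) by rewrite /z; congr Yv; lia.
  rewrite /Yv -/(cminus i k) /deltaR ginR //.
  by rewrite mulN1r rmorphN opprK.
have e4 : (x i)%:~R = z G.
  rewrite /z (_ : (i + n.+1 - G + G = i + n.+1)%N); last by lia.
  rewrite (@Yv_mod _ _ _ _ i); last by rewrite modnDr.
  by rewrite /Yv cidx_ord /deltaR (negbTE iR) mul1r.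
rewrite e1 e2 e3 e4 em.
apply: alg_core => //.
Qed.

Unset Implicit Arguments. Set Strict Implicit.

Theorem mainTheorem5 (n p : nat) (R : {set 'I_n.+1}) (x : 'I_n.+1 -> int) :
  prime p ->
  R != [set: 'I_n.+1] ->
  (forall d : 'I_n.+1, FR p R d x <= 0) ->
  (forall i : 'I_n.+1, i \in R -> 0 <= x i) ->
  exists c : 'I_n.+1 -> nat -> rat,
    (forall r k, 0 <= c r k) /\
    forall i : 'I_n.+1,
      (x i)%:~R = \sum_(r < n.+1 | r \notin R)
                    \sum_(1 <= k < (gap R r).+1) c r k * lambdaR p R r k i.
Proof.
move=> pp RT Fle Rge.
have p1 : (1 < p)%N := prime_gt1 pp.
have P1 : 1 < (p%:R : rat) by rewrite ltr1n.
have P0 : (p%:R : rat) != 0 by apply/eqP => e; rewrite e in P1; lra.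
have [j0 j0R] : exists j0, j0 \notin R.
  case: (pickP (fun j => j \notin R)) => [j h|h]; first by exists j.
  move/eqP: RT; case; apply/setP => j; rewrite inE; have := h j; by move/negbFE.
exists (cc p R x); split.
  move=> r k; rewrite /cc; case: ifP => // rR; case: ifP => [/andP[k0 kg]|_].
    apply: divr_ge0; last by rewrite exprn_ge0 // ler0n.
    rewrite ler0z; apply: Rge; exact: gap_in.
  exact: uu_ge0.
move=> i.
set m := nxt R i. set r0 := cidx n (i + m).
have r0R : r0 \notin R := nxt_notin j0R i.
have m0 : (0 < m)%N by [].
have mN : (m <= n.+1)%N := nxt_le j0R i.
have mg : (m <= gap R r0)%N := r0_gap_ge j0R i.
have back : cminus r0 m = i := r0_back j0R i.
pose w (r : 'I_n.+1) k : rat := if (k < gap R r)%N then (p%:R)^+k else - (p%:R)^+(gap R r).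
have E1 : forall r, r \notin R ->
    \sum_(1 <= k < (gap R r).+1) cc p R x r k * lambdaR p R r k i
  = (i == r)%:R * \sum_(1 <= k < (gap R r).+1) cc p R x r k
    + (if r == r0 then cc p R x r0 m * w r0 m else 0).
  move=> r rR.
  rewrite (eq_big_nat _ _ (F2 := fun k => (i == r)%:R * cc p R x r k +
       (if (r == r0) && (k == m) then cc p R x r0 m * w r0 m else 0))); last first.
    move=> k /andP[k1 kg]; rewrite ltnS in kg.
    rewrite lambda_split // mulrDr mulrC; congr (_ + _).
    case: (eqVneq i (cminus r k)) => [e|ne].
      have [km er] := key_fwd j0R rR k1 kg (esym e).
      have -> : r = r0 by rewrite er km.
      have -> : k = m by [].
      by rewrite !eqxx mulr1.
    rewrite !mulr0; case: andP => [[/eqP er /eqP ek]|//].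
    by rewrite er ek back eqxx in ne.
  rewrite big_split /= -mulr_sumr; congr (_ + _).
  case: (eqVneq r r0) => [er|ner].
    by rewrite er /=; apply: sum_pick; rewrite m0 ltnS mg.
  by rewrite big1.
rewrite (eq_bigr _ E1) big_split /=.
have S2 : \sum_(r < n.+1 | r \notin R) (if r == r0 then cc p R x r0 m * w r0 m else 0)
    = cc p R x r0 m * w r0 m.
  by rewrite (bigD1 r0) //= eqxx big1 ?addr0 // => r /andP[_ /negbTE ->].
rewrite S2.
case iR : (i \in R).
  rewrite big1 ?add0r; last first.
    move=> r rR; case: eqP => [e|_]; last by rewrite mul0r.
    by rewrite -e iR in rR.
  have mg' := r0_gap_in j0R iR.
  rewrite /w mg' /cc (negbTE r0R) m0 mg' /= back.
  by rewrite divfK // expf_neq0.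
rewrite (bigD1 i) ?iR //= eqxx mul1r.
rewrite [X in _ + X + _]big1 ?addr0; last first.
  by move=> r /andP[_ ne]; rewrite eq_sym (negbTE ne) mul0r.
have gm := r0_gap_notin j0R (negbT iR).
have gi := gap_le (negbT iR).
rewrite big_nat_recr //=.
rewrite {2}/cc iR ltnn andbF.
rewrite (eq_big_nat _ _ (F2 := fun k => (x (cminus i k))%:~R / (p%:R)^+k)); last first.
  by move=> k /andP[k1 kg]; rewrite /cc iR k1 kg.
rewrite /w gm ltnn /cc (negbTE r0R) gm ltnn andbF.
apply: final_eq => //; try by rewrite iR.
all: by move=> k k0 kg; apply: gap_in => //; rewrite iR.
Qed.
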